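(* Let $\widehat A=\mathbb{C}[[x,y,z]]$ and let $F=(f,g,h)$ and $F'=(f',g',h')$ be Poisson triples on $\widehat A$ with $f_{000}\neq 0$. If $f_{ijk}=f'_{ijk}$ and $h_{ijk}=h'_{ijk}$ for all $i,j,k\in\mathbb{N}_0$ and $g_{ij0}=g'_{ij0}$ for all $i,j\in\mathbb{N}_0$, then $F=F'$.
   Context: For $f\in\widehat A$, $f_{ijk}$ denotes the coefficient of $x^iy^jz^k$. $F=(f,g,h)\in\widehat A^3$ is a Poisson triple if there is a Poisson bracket on $\widehat A$ (Lie bracket with each $\{b,-\}$ a $\mathbb{C}$-derivation) such that $\{y,z\}=f$, $\{z,x\}=g$, $\{x,y\}=h$. *)

(* Defs.v *)
From mathcomp Require Import all_boot all_algebra.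
From mathcomp Require Import complex.
From mathcomp Require Import reals Rstruct.
Import GRing.Theory.
Set Implicit Arguments. Unset Strict Implicit. Unset Printing Implicit Defensive.
Local Open Scope ring_scope.

Definition CC : Type := complex Rdefinitions.R.

(* Ahat = C[[x,y,z]]: a formal power series is its coefficient function;
   [f i j k] is the coefficient f_{ijk} of x^i y^j z^k. *)
Definition ps : Type := nat -> nat -> nat -> CC.

Definition ps_add (f g : ps) : ps := fun i j k => f i j k + g i j k.
Definition ps_opp (f : ps) : ps := fun i j k => - f i j k.
Definition ps_zero : ps := fun _ _ _ => 0.
Definition ps_scale (c : CC) (f : ps) : ps := fun i j k => c * f i j k.
Definition ps_mul (f g : ps) : ps := fun i j k =>
  \sum_(a < i.+1) \sum_(b < j.+1) \sum_(c < k.+1)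
     f a b c * g (i - a)%N (j - b)%N (k - c)%N.

Definition ps_x : ps := fun i j k => if [&& i == 1%N, j == 0%N & k == 0%N] then 1 else 0.
Definition ps_y : ps := fun i j k => if [&& i == 0%N, j == 1%N & k == 0%N] then 1 else 0.
Definition ps_z : ps := fun i j k => if [&& i == 0%N, j == 0%N & k == 1%N] then 1 else 0.

Definition is_poisson_bracket (br : ps -> ps -> ps) : Prop :=
  (forall a u v, br (ps_add u v) a = ps_add (br u a) (br v a)) /\
  (forall a c u, br (ps_scale c u) a = ps_scale c (br u a)) /\
  (forall a u v, br a (ps_add u v) = ps_add (br a u) (br a v)) /\
  (forall a c u, br a (ps_scale c u) = ps_scale c (br a u)) /\
  (forall u, br u u = ps_zero) /\
  (forall a b c, ps_add (br a (br b c)) (ps_add (br b (br c a)) (br c (br a b)))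
                 = ps_zero) /\
  (forall a u v, br a (ps_mul u v) = ps_add (ps_mul (br a u) v) (ps_mul u (br a v))).

Definition poisson_triple (f g h : ps) : Prop :=
  exists br, is_poisson_bracket br /\
    [/\ br ps_y ps_z = f, br ps_z ps_x = g & br ps_x ps_y = h].

(* Main.v *)
Require Import Defs.
From mathcomp Require Import all_boot all_algebra.
From mathcomp Require Import complex.
From mathcomp Require Import reals Rstruct.
From mathcomp Require Import ring zify.
From Stdlib Require Import FunctionalExtensionality.
Import GRing.Theory Num.Theory.
Local Open Scope ring_scope.


Lemma psE (f g : ps) : (forall i j k, f i j k = g i j k) -> f = g.
Proof.
move=> H; apply: functional_extensionality => i.
apply: functional_extensionality => j; apply: functional_extensionality => k.
exact: H.
Qed.

Lemma sum_pick n (G : 'I_n.+1 -> CC) (q : 'I_n.+1) :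
  (forall a, a != q -> G a = 0) -> \sum_(a < n.+1) G a = G q.
Proof. by move=> H; rewrite (bigD1 q) //= big1 ?addr0. Qed.

Lemma sum_zero n (G : 'I_n.+1 -> CC) :
  (forall a, G a = 0) -> \sum_(a < n.+1) G a = 0.
Proof. by move=> H; rewrite big1. Qed.

Lemma ordn0 {n} {a : 'I_n.+1} : a != ord0 -> ((a : nat) == 0%N) = false.
Proof. by move/negbTE. Qed.

Definition ps_one : ps := fun i j k => if [&& i == 0%N, j == 0%N & k == 0%N] then 1 else 0.
Definition shx (Q : ps) : ps := fun i j k => if i is i'.+1 then Q i' j k else 0.
Definition shy (Q : ps) : ps := fun i j k => if j is j'.+1 then Q i j' k else 0.
Definition shz (Q : ps) : ps := fun i j k => if k is k'.+1 then Q i j k' else 0.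

Lemma mul1 Q : ps_mul ps_one Q = Q.
Proof.
apply: psE => i j k; rewrite /ps_mul (@sum_pick _ _ ord0) /=.
  rewrite (@sum_pick _ _ ord0) /=.
    rewrite (@sum_pick _ _ ord0) /= ?mul1r ?subn0 ?subn1 // => c hc.
    by rewrite /ps_one (ordn0 hc) andbF mul0r.
  move=> b hb; apply: sum_zero => c.
  by rewrite /ps_one (ordn0 hb) /= ?andbF mul0r.
move=> a ha; apply: sum_zero => b; apply: sum_zero => c.
by rewrite /ps_one (ordn0 ha) mul0r.
Qed.

Lemma neq_val {n} {a q : 'I_n} : a != q -> ((a : nat) == (q : nat)) = false.
Proof. by move/negbTE. Qed.

Lemma ord_max_sub {n} {a : 'I_n.+1} : a != ord_max -> ((n - a)%N == 0%N) = false.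
Proof.
move=> h; apply/negbTE; rewrite subn_eq0 -ltnNge ltn_neqAle.
by rewrite (neq_val h) /= -ltnS ltn_ord.
Qed.

Lemma mulps1 Q : ps_mul Q ps_one = Q.
Proof.
apply: psE => i j k; rewrite /ps_mul (@sum_pick _ _ ord_max) /=.
  rewrite (@sum_pick _ _ ord_max) /=.
    rewrite (@sum_pick _ _ ord_max) /= ?subnn ?mulr1 // => c hc.
    by rewrite /ps_one (ord_max_sub hc) ?andbF mulr0.
  move=> b hb; apply: sum_zero => c.
  by rewrite /ps_one (ord_max_sub hb) /= ?andbF mulr0.
move=> a ha; apply: sum_zero => b; apply: sum_zero => c.
by rewrite /ps_one (ord_max_sub ha) mulr0.
Qed.

Lemma ord1_ne1 (a : 'I_1) : ((a : nat) == 1%N) = false.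
Proof. by case: a => [[|m]]. Qed.

Lemma mulx Q : ps_mul ps_x Q = shx Q.
Proof.
apply: psE => i j k; rewrite /ps_mul; case: i => [|i].
  apply: sum_zero => a; apply: sum_zero => b; apply: sum_zero => c.
  by rewrite /ps_x ord1_ne1 mul0r.
rewrite (@sum_pick _ _ (@Ordinal i.+2 1 isT)) /=.
  rewrite (@sum_pick _ _ ord0) /=.
    rewrite (@sum_pick _ _ ord0) /= ?mul1r ?subn0 ?subn1 // => c hc.
    by rewrite /ps_x (ordn0 hc) ?andbF mul0r.
  move=> b hb; apply: sum_zero => c.
  by rewrite /ps_x (ordn0 hb) /= ?andbF mul0r.
move=> a ha; apply: sum_zero => b; apply: sum_zero => c.
by rewrite /ps_x (neq_val ha) mul0r.
Qed.

Lemma muly Q : ps_mul ps_y Q = shy Q.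
Proof.
apply: psE => i j k; rewrite /ps_mul.
rewrite (@sum_pick _ _ ord0) /=; last first.
  move=> a ha; apply: sum_zero => b; apply: sum_zero => c.
  by rewrite /ps_y (ordn0 ha) mul0r.
case: j => [|j].
  apply: sum_zero => b; apply: sum_zero => c.
  by rewrite /ps_y ord1_ne1 /= mul0r.
rewrite (@sum_pick _ _ (@Ordinal j.+2 1 isT)) /=.
  rewrite (@sum_pick _ _ ord0) /= ?mul1r ?subn0 ?subn1 // => c hc.
  by rewrite /ps_y (ordn0 hc) ?andbF mul0r.
move=> b hb; apply: sum_zero => c.
by rewrite /ps_y (neq_val hb) /= mul0r.
Qed.

Lemma mulz Q : ps_mul ps_z Q = shz Q.
Proof.
apply: psE => i j k; rewrite /ps_mul.
rewrite (@sum_pick _ _ ord0) /=; last first.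
  move=> a ha; apply: sum_zero => b; apply: sum_zero => c.
  by rewrite /ps_z (ordn0 ha) mul0r.
rewrite (@sum_pick _ _ ord0) /=; last first.
  move=> b hb; apply: sum_zero => c.
  by rewrite /ps_z (ordn0 hb) /= mul0r.
case: k => [|k].
  apply: sum_zero => c.
  by rewrite /ps_z ord1_ne1 /= mul0r.
rewrite (@sum_pick _ _ (@Ordinal k.+2 1 isT)) /= ?mul1r ?subn0 ?subn1 // => c hc.
by rewrite /ps_z (neq_val hc) /= mul0r.
Qed.

Lemma mul_shx P Q : ps_mul P (shx Q) = shx (ps_mul P Q).
Proof.
apply: psE => i j k; rewrite /ps_mul; case: i => [|i] /=.
  apply: sum_zero => a; apply: sum_zero => b; apply: sum_zero => c.
  by rewrite ?sub0n /= ?mulr0.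
rewrite big_ord_recr /= subnn.
rewrite [X in _ + X]big1 ?addr0; last first.
  by move=> b _; apply: sum_zero => c; rewrite /= mulr0.
apply: eq_bigr => a _; rewrite subSn //; rewrite -ltnS; exact: ltn_ord.
Qed.

Lemma mul_shy P Q : ps_mul P (shy Q) = shy (ps_mul P Q).
Proof.
apply: psE => i j k; rewrite /ps_mul; case: j => [|j] /=.
  apply: sum_zero => a; apply: sum_zero => b; apply: sum_zero => c.
  by rewrite ?sub0n /= ?mulr0.
apply: eq_bigr => a _.
rewrite big_ord_recr /= subnn.
rewrite [X in _ + X]big1 ?addr0; last first.
  by move=> c _; rewrite /= mulr0.
apply: eq_bigr => b _; rewrite subSn //; rewrite -ltnS; exact: ltn_ord.
Qed.

Lemma mul_shz P Q : ps_mul P (shz Q) = shz (ps_mul P Q).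
Proof.
apply: psE => i j k; rewrite /ps_mul; case: k => [|k] /=.
  apply: sum_zero => a; apply: sum_zero => b; apply: sum_zero => c.
  by rewrite ?sub0n /= ?mulr0.
apply: eq_bigr => a _; apply: eq_bigr => b _.
rewrite big_ord_recr /= subnn mulr0 addr0.
apply: eq_bigr => c _; rewrite subSn //; rewrite -ltnS; exact: ltn_ord.
Qed.

Lemma mulDr P Q R : ps_mul P (ps_add Q R) = ps_add (ps_mul P Q) (ps_mul P R).
Proof.
apply: psE => i j k; rewrite /ps_mul /ps_add -big_split; apply: eq_bigr => a _.
rewrite -big_split; apply: eq_bigr => b _.
rewrite -big_split; apply: eq_bigr => c _; by rewrite mulrDr.
Qed.

Lemma mul0 P : ps_mul P ps_zero = ps_zero.
Proof.
apply: psE => i j k; rewrite /ps_mul.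
apply: sum_zero => a; apply: sum_zero => b; apply: sum_zero => c.
by rewrite /ps_zero mulr0.
Qed.

Lemma mulNl P Q i j k : ps_mul (ps_opp P) Q i j k = - ps_mul P Q i j k.
Proof.
rewrite /ps_mul -sumrN; apply: eq_bigr => a _.
rewrite -sumrN; apply: eq_bigr => b _.
rewrite -sumrN; apply: eq_bigr => c _; by rewrite /ps_opp mulNr.
Qed.

Lemma mulBl P P' Q i j k :
  ps_mul P Q i j k - ps_mul P' Q i j k =
  ps_mul (fun i j k => P i j k - P' i j k) Q i j k.
Proof.
rewrite /ps_mul -sumrB; apply: eq_bigr => a _.
rewrite -sumrB; apply: eq_bigr => b _.
rewrite -sumrB; apply: eq_bigr => c _; by rewrite mulrBl.
Qed.

Lemma mulBr P Q Q' i j k :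
  ps_mul P Q i j k - ps_mul P Q' i j k =
  ps_mul P (fun i j k => Q i j k - Q' i j k) i j k.
Proof.
rewrite /ps_mul -sumrB; apply: eq_bigr => a _.
rewrite -sumrB; apply: eq_bigr => b _.
rewrite -sumrB; apply: eq_bigr => c _; by rewrite mulrBr.
Qed.

Definition dx (u : ps) : ps := fun i j k => (i.+1)%:R * u i.+1 j k.
Definition dy (u : ps) : ps := fun i j k => (j.+1)%:R * u i j.+1 k.
Definition dz (u : ps) : ps := fun i j k => (k.+1)%:R * u i j k.+1.

Lemma dx_add u v : dx (ps_add u v) = ps_add (dx u) (dx v).
Proof. by apply: psE => i j k; rewrite /dx /ps_add mulrDr. Qed.
Lemma dy_add u v : dy (ps_add u v) = ps_add (dy u) (dy v).
Proof. by apply: psE => i j k; rewrite /dy /ps_add mulrDr. Qed.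
Lemma dz_add u v : dz (ps_add u v) = ps_add (dz u) (dz v).
Proof. by apply: psE => i j k; rewrite /dz /ps_add mulrDr. Qed.

Lemma dx_c c : dx (ps_scale c ps_one) = ps_zero.
Proof. by apply: psE => i j k; rewrite /dx /ps_scale /ps_one /= mulr0 mulr0. Qed.
Lemma dy_c c : dy (ps_scale c ps_one) = ps_zero.
Proof. by apply: psE => i j k; rewrite /dy /ps_scale /ps_one /= andbF mulr0 mulr0. Qed.
Lemma dz_c c : dz (ps_scale c ps_one) = ps_zero.
Proof. by apply: psE => i j k; rewrite /dz /ps_scale /ps_one /= !andbF mulr0 mulr0. Qed.

Lemma dx_shx A : dx (shx A) = ps_add A (shx (dx A)).
Proof.
apply: psE => i j k; rewrite /dx /ps_add /shx; case: i => [|i].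
  by rewrite mul1r addr0.
by rewrite -addn1 natrD mulrDl mul1r addrC.
Qed.
Lemma dy_shy A : dy (shy A) = ps_add A (shy (dy A)).
Proof.
apply: psE => i j k; rewrite /dy /ps_add /shy; case: j => [|j].
  by rewrite mul1r addr0.
by rewrite -addn1 natrD mulrDl mul1r addrC.
Qed.
Lemma dz_shz A : dz (shz A) = ps_add A (shz (dz A)).
Proof.
apply: psE => i j k; rewrite /dz /ps_add /shz; case: k => [|k].
  by rewrite mul1r addr0.
by rewrite -addn1 natrD mulrDl mul1r addrC.
Qed.
Lemma dx_shy A : dx (shy A) = shy (dx A).
Proof. by apply: psE => i j k; rewrite /dx /shy; case: j => [|j] //; rewrite mulr0. Qed.
Lemma dx_shz A : dx (shz A) = shz (dx A).
Proof. by apply: psE => i j k; rewrite /dx /shz; case: k => [|k] //; rewrite mulr0. Qed.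
Lemma dy_shx A : dy (shx A) = shx (dy A).
Proof. by apply: psE => i j k; rewrite /dy /shx; case: i => [|i] //; rewrite mulr0. Qed.
Lemma dy_shz A : dy (shz A) = shz (dy A).
Proof. by apply: psE => i j k; rewrite /dy /shz; case: k => [|k] //; rewrite mulr0. Qed.
Lemma dz_shx A : dz (shx A) = shx (dz A).
Proof. by apply: psE => i j k; rewrite /dz /shx; case: i => [|i] //; rewrite mulr0. Qed.
Lemma dz_shy A : dz (shy A) = shy (dz A).
Proof. by apply: psE => i j k; rewrite /dz /shy; case: j => [|j] //; rewrite mulr0. Qed.

Definition Ax (u : ps) : ps := fun i j k => u i.+1 j k.
Definition By (u : ps) : ps := fun i j k => if i is 0%N then u 0%N j.+1 k else 0.
Definition Cz (u : ps) : ps := fun i j k =>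
  if i is 0%N then (if j is 0%N then u 0%N 0%N k.+1 else 0) else 0.

Lemma decomp u : u = ps_add (ps_scale (u 0%N 0%N 0%N) ps_one)
  (ps_add (ps_mul ps_x (Ax u)) (ps_add (ps_mul ps_y (By u)) (ps_mul ps_z (Cz u)))).
Proof.
rewrite mulx muly mulz; apply: psE => i j k.
rewrite /ps_add /ps_scale /ps_one /shx /shy /shz /Ax /By /Cz.
case: i => [|i]; case: j => [|j]; case: k => [|k] /=;
  rewrite ?mulr1 ?mulr0 ?addr0 ?add0r. all: done.
Qed.


Definition Phi (D : ps -> ps) (u : ps) : ps :=
  ps_add (ps_mul (D ps_x) (dx u))
    (ps_add (ps_mul (D ps_y) (dy u)) (ps_mul (D ps_z) (dz u))).

Lemma chain (D : ps -> ps) :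
  (forall u v, D (ps_add u v) = ps_add (D u) (D v)) ->
  (forall c u, D (ps_scale c u) = ps_scale c (D u)) ->
  (forall u v, D (ps_mul u v) = ps_add (ps_mul (D u) v) (ps_mul u (D v))) ->
  forall u, D u = Phi D u.
Proof.
move=> Dadd Dscale Dmul.
have D1 : forall i j k, D ps_one i j k = 0.
  move=> i j k.
  have := Dmul ps_one ps_one; rewrite mul1 mulps1 => /(congr1 (fun F => F i j k)).
  rewrite /ps_add mul1 => h.
  have : D ps_one i j k + D ps_one i j k = D ps_one i j k + 0 by rewrite addr0 -h.
  by move/addrI.
suff H : forall n u i j k, (i + j + k < n)%N -> D u i j k = Phi D u i j k.
  move=> u; apply: psE => i j k; exact: (H (i + j + k).+1).
elim=> [|n IH] u i j k hlt; first by [].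
have E := decomp u.
move: E; set A := Ax u; set B := By u; set C := Cz u; set c := u 0%N 0%N 0%N.
move=> E; rewrite E.
have eA : shx (D A) i j k = shx (ps_mul (D ps_x) (dx A)) i j k
   + shx (ps_mul (D ps_y) (dy A)) i j k + shx (ps_mul (D ps_z) (dz A)) i j k.
  case: i hlt => [|i] hlt /=; first by rewrite !addr0.
  rewrite IH /Phi /ps_add ?addrA //; lia.
have eB : shy (D B) i j k = shy (ps_mul (D ps_x) (dx B)) i j k
   + shy (ps_mul (D ps_y) (dy B)) i j k + shy (ps_mul (D ps_z) (dz B)) i j k.
  destruct j as [|j]; simpl; first by rewrite !addr0.
  rewrite IH /Phi /ps_add ?addrA //; lia.
have eC : shz (D C) i j k = shz (ps_mul (D ps_x) (dx C)) i j k
   + shz (ps_mul (D ps_y) (dy C)) i j k + shz (ps_mul (D ps_z) (dz C)) i j k.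
  destruct k as [|k]; simpl; first by rewrite !addr0.
  rewrite IH /Phi /ps_add ?addrA //; lia.
rewrite /Phi !Dadd !Dmul Dscale !mulx !muly !mulz.
rewrite !dx_add !dy_add !dz_add dx_c dy_c dz_c dx_shx dx_shy dx_shz
  dy_shx dy_shy dy_shz dz_shx dz_shy dz_shz.
rewrite !mulDr !mul0 !mul_shx !mul_shy !mul_shz.
rewrite /ps_add /ps_scale /ps_zero; cbv beta.
rewrite D1 eA eB eC.
ring.
Qed.


Lemma mul0l Q : ps_mul ps_zero Q = ps_zero.
Proof.
apply: psE => i j k; rewrite /ps_mul.
apply: sum_zero => a; apply: sum_zero => b; apply: sum_zero => c.
by rewrite /ps_zero mul0r.
Qed.

Definition Jexpr (f g h : ps) i j k : CC :=
  ps_mul h (dy f) i j k - ps_mul g (dz f) i j k - ps_mul h (dx g) i j k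
  + ps_mul f (dz g) i j k + ps_mul g (dx h) i j k - ps_mul f (dy h) i j k.

Lemma jac {f g h} : poisson_triple f g h -> forall i j k, Jexpr f g h i j k = 0.
Proof.
case=> br [[Ladd [Lsc [Radd [Rsc [Alt [Jac Leib]]]]]] [ef eg eh]] i j k.
have anti : forall u v, br u v = ps_opp (br v u).
  move=> u v; apply: psE => i' j' k'.
  have := Alt (ps_add u v); rewrite Ladd !Radd !Alt.
  move/(congr1 (fun F => F i' j' k')); rewrite /ps_add /ps_zero /ps_opp.
  rewrite add0r addr0 => /eqP; rewrite addr_eq0 => /eqP //.
have ch : forall a u, br a u = Phi (br a) u.
  move=> a; apply: chain; [exact: Radd | exact: Rsc | exact: Leib].
have := Jac ps_x ps_y ps_z.
rewrite ef eg eh (ch ps_x f) (ch ps_y g) (ch ps_z h) /Phi !Alt ef eg eh.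
rewrite (anti ps_x ps_z) (anti ps_y ps_x) (anti ps_z ps_y) ef eg eh !mul0l.
move/(congr1 (fun F => F i j k)); rewrite /ps_add /ps_zero; cbv beta.
rewrite !mulNl /Jexpr => <-; ring.
Qed.

Theorem lemma2p2 (f g h f' g' h' : ps) :
  poisson_triple f g h -> poisson_triple f' g' h' ->
  f 0%N 0%N 0%N != 0 ->
  (forall i j k, f i j k = f' i j k) ->
  (forall i j k, h i j k = h' i j k) ->
  (forall i j, g i j 0%N = g' i j 0%N) ->
  (f, g, h) = (f', g', h').
Proof.
move=> P1 P2 f0 ef eh eg.
have Ef : f = f' by apply: psE.
have Eh : h = h' by apply: psE.
subst f' h'.
set d : ps := fun i j k => g i j k - g' i j k.
have dz_d : dz d = fun i j k => dz g i j k - dz g' i j k.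
  by apply: psE => i j k; rewrite /dz /d mulrBr.
have dx_d : dx d = fun i j k => dx g i j k - dx g' i j k.
  by apply: psE => i j k; rewrite /dx /d mulrBr.
have E : forall i j k, ps_mul f (dz d) i j k - ps_mul h (dx d) i j k
    - ps_mul d (dz f) i j k + ps_mul d (dx h) i j k = 0.
  move=> i j k; rewrite dz_d dx_d /d -!mulBr -!mulBl.
  have := congr2 (fun a b => a - b) (jac P1 i j k) (jac P2 i j k).
  rewrite subrr /Jexpr => <-; ring.
suff Hd : forall k i j, d i j k = 0.
  congr (_, _, _); apply: psE => i j k; apply/eqP; rewrite -subr_eq0; apply/eqP.
  exact: Hd.
suff H : forall K k, (k <= K)%N -> forall i j, d i j k = 0.
  move=> k; exact: (H k).
elim=> [|K IHK] k hk.
  by move: hk; rewrite leqn0 => /eqP -> i j; rewrite /d eg subrr.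
case: (leqP k K) => hkK; first exact: IHK.
have -> : k = K.+1 by lia.
suff H2 : forall N i j, (i + j <= N)%N -> d i j K.+1 = 0.
  move=> i j; exact: (H2 (i + j)%N).
have key : forall i j, (forall i' j' k', (k' <= K)%N \/ (k' = K.+1 /\ (i' + j' < i + j)%N) ->
    d i' j' k' = 0) -> d i j K.+1 = 0.
  move=> i j hd.
  have := E i j K.
  have -> : ps_mul h (dx d) i j K = 0.
    apply: sum_zero => a; apply: sum_zero => b; apply: sum_zero => c.
    rewrite /dx hd ?mulr0 //; left; lia.
  have -> : ps_mul d (dz f) i j K = 0.
    apply: sum_zero => a; apply: sum_zero => b; apply: sum_zero => c.
    rewrite hd ?mul0r //; left; have := ltn_ord c; lia.
  have -> : ps_mul d (dx h) i j K = 0.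
    apply: sum_zero => a; apply: sum_zero => b; apply: sum_zero => c.
    rewrite hd ?mul0r //; left; have := ltn_ord c; lia.
  rewrite /ps_mul (@sum_pick _ _ ord0); last first.
    move=> a ha; apply: sum_zero => b; apply: sum_zero => c.
    rewrite /dz hd ?mulr0 //.
    have := ltn_ord a; have := ltn_ord b; have := ltn_ord c.
    have := negbT (ordn0 ha); lia.
  rewrite (@sum_pick _ _ ord0); last first.
    move=> b hb; apply: sum_zero => c.
    rewrite /dz hd ?mulr0 //.
    have := ltn_ord b; have := ltn_ord c.
    have := negbT (ordn0 hb); lia.
  rewrite (@sum_pick _ _ ord0); last first.
    move=> c hc.
    rewrite /dz hd ?mulr0 //.
    have := ltn_ord c; have := negbT (ordn0 hc); lia.
  rewrite /= /dz !subn0 !subr0 addr0 => /eqP.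
  rewrite !mulf_eq0 (negbTE f0) pnatr_eq0 /= => /eqP //.
elim=> [|N IHN] i j hij; apply: key => i' j' k' [hk'|[-> hlt]].
- exact: IHK.
- lia.
- exact: IHK.
- apply: IHN; lia.
Qed.
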